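(* There exists a constant $c>0$ such that for $p=p(n)\le c/n^2$ the following holds asymptotically almost surely: for every nonempty subset $F$ of the hyperedges of $\mathcal H=\mathcal H(\Gamma(n,p))$ there exist a vertex $v$ of $\mathcal H$ and a hyperedge $E\in F$ such that $E$ is the only hyperedge of $F$ containing $v$, and moreover $v$ is pivotal for $E$.
   Context: The random triangular group $\Gamma(n,p)$ is given by a presentation $\langle S\mid R\rangle$, where $|S|=n$ and $R$ contains independently, each with probability $p$, every cyclically reduced word $abc$ of length three over $S\cup S^{-1}$ ($a\neq b^{-1}$, $b\neq c^{-1}$, $c\neq a^{-1}$). Relations are classified: type 1 are words $aaa$ (with $a\in S\cup S^{-1}$); type 2 are words of the form $aab$, $aba$, $baa$ with $a\neq b$, in which $b$ is called pivotal; type 3 are words $abc$ with $a,b,c$ pairwise distinct letters, in which every element is pivotal. The random multi-hypergraph $\mathcal H(\Gamma(n,p))$ has vertex set $S$, and each relation $r\in R$ gives one hyperedge: if $r$ is of type 3, the 3-edge $E=\{a,b,c\}\subseteq S$ of the three generators such that $r$ is built from letters of $E\cup E^{-1}$, with all three vertices pivotal; if $r$ is of type 2, the 2-edge $E=\{a,b\}\subseteq S$ such that $r$ is built from letters of $E\cup E^{-1}$, with the generator corresponding to the pivotal letter of $r$ marked as pivotal for $E$; if $r$ is of type 1 ($r=aaa$ or $r=a^{-1}a^{-1}a^{-1}$ with $a\in S$), the 1-edge $\{a\}$. Asymptotically almost surely means with probability tending to $1$ as $n\to\infty$. *)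

(* Defs.v *)
From HB Require Import structures.
From mathcomp Require Import all_boot all_order all_algebra.
From mathcomp Require Import all_classical all_reals all_analysis.
Set Implicit Arguments. Unset Strict Implicit. Unset Printing Implicit Defensive.
Import Order.TTheory GRing.Theory Num.Theory.
Local Open Scope ring_scope.

(* A letter of S ∪ S^{-1} with S = 'I_n: (generator, is_inverse). *)
Definition letter (n : nat) := ('I_n * bool)%type.
Definition linv n (x : letter n) : letter n := (x.1, ~~ x.2).

Definition word (n : nat) := (letter n * letter n * letter n)%type.

Definition cyc_red n (w : word n) : bool :=
  let: (a, b, c) := w in
  [&& a != linv b, b != linv c & c != linv a].

Definition CR (n : nat) : {set word n} := [set w | cyc_red w].

Definition type3 n (w : word n) : bool :=
  let: (a, b, c) := w in [&& a != b, b != c & a != c].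

(* x is a pivotal letter of w: in type 3 every letter; in type 2
   (aab, aba, baa with a <> b) the letter b. *)
Definition piv_letter n (w : word n) (x : letter n) : bool :=
  let: (a, b, c) := w in
  (type3 w && (x \in [:: a; b; c])) ||
  [|| [&& a == b, c != a & x == c],
      [&& a == c, b != a & x == b]
    | [&& b == c, a != b & x == a]].

Definition verts n (w : word n) : pred 'I_n :=
  let: (a, b, c) := w in fun v => v \in [:: a.1; b.1; c.1].

Definition pivotal n (w : word n) (v : 'I_n) : bool :=
  [exists s : bool, piv_letter w (v, s)].

(* The event of Lemma 2.2, for a given set of relations R: every nonempty
   set F of hyperedges (hyperedges are indexed by relations, multi-hypergraph)
   has a vertex v and E in F with E the only hyperedge of F containing v,
   and v pivotal for E. *)
Definition good n (R : {set word n}) : bool :=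
  [forall F : {set word n},
     ((F \subset R) && (F != finset.set0)) ==>
     [exists v : 'I_n, [exists E in F,
        pivotal E v && [forall E' in F, verts E' v ==> (E' == E)]]]].

(* Probability of an event under Γ(n,p): each cyclically reduced word is in R
   independently with probability p. *)
Definition Pr (R : realType) (n : nat) (p : R) (A : pred {set word n}) : R :=
  \sum_(X : {set word n} | (X \subset CR n) && A X)
     p ^+ #|X| * (1 - p) ^+ (#|CR n| - #|X|).

(* Main.v *)
Require Import Defs.
From HB Require Import structures.
From mathcomp Require Import all_boot all_order all_algebra.
From mathcomp Require Import all_classical all_reals all_analysis.
From mathcomp Require Import ring lra zify.
Import Order.TTheory GRing.Theory Num.Theory.
Import numFieldNormedType.Exports.
Local Open Scope ring_scope.
Set Implicit Arguments. Unset Strict Implicit. Unset Printing Implicit Defensive.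

Lemma sum_subsets_card (R : realType) (T : finType) (D : {set T}) (f : nat -> R) :
  \sum_(Y : {set T} | Y \subset D) f #|Y| =
  \sum_(k < #|D|.+1) f k *+ 'C(#|D|, k).
Proof.
rewrite (partition_big (fun Y : {set T} => (inord #|Y| : 'I_(#|D|.+1))) xpredT) //=.
apply: eq_bigr => k _.
rewrite (eq_bigr (fun _ => f k)); last first.
  by move=> Y /andP[YD /eqP <-]; rewrite inordK // ltnS subset_leq_card.
rewrite sumr_const -cards_draws; congr (_ *+ _).
apply: eq_card => Y; rewrite !inE -topredE /=.
case YD: (Y \subset D) => //=.
have h : (#|Y| < #|D|.+1)%N by rewrite ltnS subset_leq_card.
apply/eqP/eqP => [<-|e]; first by rewrite inordK.
by apply: val_inj; rewrite /= inordK // e.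
Qed.

Lemma sum_binom_subsets (R : realType) (T : finType) (D : {set T}) (p : R) :
  \sum_(Y : {set T} | Y \subset D) p ^+ #|Y| * (1 - p) ^+ (#|D| - #|Y|) = 1.
Proof.
rewrite (@sum_subsets_card R T D (fun k => p ^+ k * (1 - p) ^+ (#|D| - k))).
transitivity ((1 - p + p) ^+ #|D|); last by rewrite subrK expr1n.
by rewrite exprDn; apply: eq_bigr => k _; rewrite mulrC.
Qed.

Lemma sum_supersets (R : realType) (T : finType) (A F : {set T}) (p : R) :
  F \subset A ->
  \sum_(X : {set T} | (X \subset A) && (F \subset X)) p ^+ #|X| * (1 - p) ^+ (#|A| - #|X|)
  = p ^+ #|F|.
Proof.
move=> FA.
rewrite (reindex_onto (fun Y => F :|: Y) (fun X => X :\: F)); last first.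
  move=> X /andP[_ FX]; apply/setP => x; rewrite !inE.
  by case xF: (x \in F) => //=; rewrite (fintype.subsetP FX).
transitivity (p ^+ #|F| * \sum_(Y : {set T} | Y \subset A :\: F)
   p ^+ #|Y| * (1 - p) ^+ (#|A :\: F| - #|Y|)); last first.
  by rewrite sum_binom_subsets mulr1.
rewrite mulr_sumr.
apply: eq_big => [Y|Y].
  apply/idP/idP.
  - case/andP=> /andP[FYA _] /eqP <-; apply/fintype.subsetP => x; rewrite !inE.
    by case: (x \in F) => //= xY; apply: (fintype.subsetP FYA); rewrite inE xY orbT.
  - move=> YAF; have /subsetDP[YA dYF] := YAF.
    rewrite finset.subsetUl finset.subUset FA YA /=; apply/eqP/setP => x; rewrite !inE.
    case xY: (x \in Y); last by case: (x \in F).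
    by rewrite orbT andbT (disjointFr dYF xY).
move=> /andP[_ /eqP YE].
have dYF : [disjoint Y & F].
  by rewrite -YE finset.disjoints_subset finset.setDE finset.subsetIr.
have cU : #|F :|: Y| = (#|F| + #|Y|)%N.
  by rewrite cardsU finset.setIC (disjoint_setI0 dYF) cards0 subn0.
rewrite cU exprD -mulrA; congr (_ * (_ * _ ^+ _)).
by rewrite cardsD (finset.setIidPr FA) subnDA.
Qed.

Definition badF n (F : {set word n}) : bool :=
  (F != finset.set0) && ~~ [exists v : 'I_n, [exists E in F,
        pivotal E v && [forall E' in F, verts E' v ==> (E' == E)]]].
Arguments badF {n} F.

Definition wt (R : realType) n (p : R) (X : {set word n}) : R :=
  p ^+ #|X| * (1 - p) ^+ (#|CR n| - #|X|).
Arguments wt {R n} p X.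

Lemma wt_ge0 (R : realType) n (p : R) (X : {set word n}) : 0 <= p <= 1 -> 0 <= wt p X.
Proof.
case/andP=> p0 p1; rewrite /wt mulr_ge0 // exprn_ge0 // subr_ge0 //.
Qed.

Lemma one_minus_Pr (R : realType) n (p : R) : 0 <= p <= 1 ->
  0 <= 1 - @Pr R n p (@good n) <=
  \sum_(F : {set word n} | (F \subset CR n) && badF F) p ^+ #|F|.
Proof.
move=> hp.
have tot := @sum_binom_subsets R _ (CR n) p.
rewrite (bigID (@good n)) /= in tot.
have -> : 1 - @Pr R n p (@good n) =
   \sum_(X : {set word n} | (X \subset CR n) && ~~ good X) wt p X.
  by rewrite -tot /Pr addrC addrK.
apply/andP; split; first by apply: sumr_ge0 => X _; apply: wt_ge0.
apply: (@le_trans _ _ (\sum_(X : {set word n} | X \subset CR n)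
    \sum_(F : {set word n} | (F \subset X) && badF F) wt p X)).
  rewrite [X in X <= _]big_mkcond /= [X in _ <= X]big_mkcond /=.
  apply: ler_sum => X _.
  case XC: (X \subset CR n) => //=.
  case gX: (good X) => /=; first by apply: sumr_ge0 => F _; apply: wt_ge0.
  move/negbT: gX => /forallPn [F]; rewrite negb_imply => /andP[/andP[FX Fne] HF].
  rewrite (bigD1 F) /=; last by rewrite FX /badF Fne HF.
  by rewrite lerDl; apply: sumr_ge0 => G _; apply: wt_ge0.
rewrite (exchange_big_dep (@badF n)) /=; last by move=> X F _ /andP[].
rewrite big_mkcond [X in _ <= X]big_mkcond /=.
apply: ler_sum => F _.
case bF: (badF F); rewrite ?andbT ?andbF /=; last by [].
case FC: (F \subset CR n) => /=.
  rewrite le_eqVlt; apply/orP; left; apply/eqP.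
  rewrite -(@sum_supersets R _ _ _ p FC); apply: eq_bigl => X; by rewrite andbT.
rewrite big_pred0 // => X; apply/negP => /and3P[XC FX _].
by move: FC; rewrite (fintype.subset_trans FX XC).
Qed.

Definition vset n (w : word n) : {set 'I_n} := [set v | verts w v].
Definition nonpiv n (w : word n) : {set 'I_n} := [set v in vset w | ~~ pivotal w v].

Lemma vsetE n (a b c : letter n) : vset (a, b, c) = [set a.1; b.1; c.1].
Proof. by apply/setP => v; rewrite !inE /= !in_cons in_nil orbF !orbA. Qed.

Lemma card_le1 (T : finType) (A : {set T}) x : A \subset [set x] -> (#|A| <= 1)%N.
Proof. by move=> h; rewrite -(cards1 x) subset_leq_card. Qed.

Lemma card_le2 (T : finType) (A : {set T}) x y : A \subset [set x; y] -> (#|A| <= 2)%N.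
Proof. move=> h; apply: leq_trans (subset_leq_card h) _; rewrite cards2; by case: (x != y). Qed.

Lemma card_le3 (T : finType) (x y z : T) : (#|[set x; y; z]| <= 3)%N.
Proof.
apply: leq_trans (leq_card_setU _ _) _; rewrite cards2 cards1.
by case: (x != y).
Qed.

Lemma edge_charge n (w : word n) : (#|vset w| + #|nonpiv w| <= 3)%N.
Proof.
case: w => [[a b] c].
have pivL : forall x : letter n, piv_letter (a, b, c) x -> pivotal (a, b, c) x.1.
  by case=> v s h; apply/existsP; exists s.
case T3: (type3 (a, b, c)).
  have -> : nonpiv (a, b, c) = finset.set0.
    apply/setP => v; rewrite /nonpiv vsetE !inE.
    apply/negP => /andP[hv /negP]; apply.
    case/orP: hv => [/orP[]|] /eqP ->; [apply: (pivL a)|apply: (pivL b)|apply: (pivL c)];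
    by move: T3; rewrite /= => ->; rewrite !in_cons !eqxx ?orbT.
  by rewrite cards0 addn0 vsetE card_le3.
have H : forall y z : letter n, piv_letter (a, b, c) z ->
   (forall v, v \in vset (a, b, c) -> (v == y.1) || (v == z.1)) ->
   (#|vset (a, b, c)| + #|nonpiv (a, b, c)| <= 3)%N.
  move=> y z pz hv; rewrite -[3%N]/(2 + 1)%N; apply: leq_add.
    apply: (@card_le2 _ _ y.1 z.1); apply/fintype.subsetP => v /hv.
    by rewrite !inE.
  apply: (@card_le1 _ _ y.1); apply/fintype.subsetP => v.
  move=> hvn; have /andP[vin npv] : (v \in vset (a, b, c)) && ~~ pivotal (a, b, c) v.
    by move: hvn; rewrite /nonpiv inE.
  rewrite inE; case/orP: (hv v vin) => // /eqP vz.
  by move/negP: npv; case; rewrite vz; apply: pivL.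
case: (eqVneq a b) => [eab|nab].
  case: (eqVneq c a) => [eca|nca].
    rewrite -[3%N]/(2 + 1)%N; apply: leq_add.
      apply: (@card_le2 _ _ a.1 a.1); apply/fintype.subsetP => v.
      by rewrite vsetE !inE -eab eca !orbb.
    apply: (@card_le1 _ _ a.1); apply/fintype.subsetP => v.
    by rewrite /nonpiv vsetE !inE -eab eca !orbb => /andP[].
  apply: (H a c).
    by rewrite -eab /= !eqxx nca /= ?orbT.
  by move=> v; rewrite vsetE !inE -eab orbb.
case: (eqVneq b c) => [ebc|nbc].
  apply: (H b a).
    by rewrite -ebc /= !eqxx nab /= ?orbT.
  by move=> v; rewrite vsetE !inE -ebc -orbA orbb orbC.
have eac : a = c.
  apply/eqP; move: T3; rewrite /= nab nbc /=; by case: (a == c).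
apply: (H a b).
  have nba : b != a by rewrite eq_sym.
  by rewrite -eac /= !eqxx nba /= ?orbT.
by move=> v; rewrite vsetE !inE -eac orbC orbA orbb.
Qed.

Section Comb.
Local Open Scope nat_scope.

Definition VF n (F : {set word n}) : {set 'I_n} := \bigcup_(E in F) vset E.

Definition chg n (E : word n) (v : 'I_n) : nat := if v \in nonpiv E then 2 else 1.

Lemma sum_chg n (E : word n) : \sum_(v in vset E) chg E v = #|vset E| + #|nonpiv E|.
Proof.
rewrite /chg (eq_bigr (fun v => 1 + (v \in nonpiv E))); last first.
  by move=> v _; case: (v \in nonpiv E).
rewrite big_split /= sum1_card; congr (_ + _).
rewrite -sum1_card big_mkcond /= [in RHS]big_mkcond /=.
apply: eq_bigr => v _.
case h: (v \in nonpiv E); last by case: (v \in vset E).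
by move: h; rewrite /nonpiv inE => /andP[->].
Qed.

Lemma bad_count n (F : {set word n}) : badF F -> 2 * #|VF F| <= 3 * #|F|.
Proof.
case/andP=> _ nex.
have step1 : 2 * #|VF F| <= \sum_(v in VF F) \sum_(E in F | v \in vset E) chg E v.
  rewrite mulnC -sum_nat_const; apply: leq_sum => v.
  case/bigcupP => E EF vE.
  rewrite (bigD1 E) /=; last by rewrite EF vE.
  rewrite /chg; case nE: (v \in nonpiv E); first by rewrite leq_addr.
  have pv : pivotal E v by move: nE; rewrite /nonpiv inE vE /= => /negbFE.
  have : ~~ [forall E' in F, verts E' v ==> (E' == E)].
    apply: contra nex => h; apply/existsP; exists v; apply/existsP; exists E.
    by rewrite EF pv.
  case/forallPn => E'; rewrite negb_imply negb_imply => /andP[E'F /andP[vE' nE'E]].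
  rewrite (bigD1 E') /=; last by rewrite E'F nE'E inE vE'.
  by case: (v \in nonpiv E').
apply: (leq_trans step1).
rewrite (exchange_big_dep (mem F)) /=; last by move=> v E _ /andP[].
rewrite mulnC -sum_nat_const; apply: leq_sum => E EF.
apply: leq_trans (edge_charge E); rewrite -sum_chg.
rewrite leq_eqVlt; apply/orP; left; apply/eqP.
apply: eq_bigl => v; rewrite andbC.
case vE: (v \in vset E); rewrite ?andbF ?andbT //= EF /=.
by apply/bigcupP; exists E.
Qed.
End Comb.

Lemma expR_half_le2 (R : realType) : expR (2^-1 : R) <= 2.
Proof.
have h := expR_ge1Dx (- 2^-1 : R).
rewrite expRN in h.
have hp : 0 < expR (2^-1 : R) := expR_gt0 _.
rewrite -(@ler_pM2r _ (expR (2^-1 : R))^-1) ?invr_gt0 // divff ?gt_eqF //.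
lra.
Qed.

Lemma powpow_R (R : realType) k : (k ^ k)%:R <= (4 ^ k * k`!)%:R :> R.
Proof.
case: k => [|k]; first by [].
have h := @expR_ge1Dxn R (k.+1)%:R k (ler0n _ _).
have e4 : expR (k.+1%:R : R) <= 4 ^+ k.+1.
  have -> : (k.+1%:R : R) = (2 * k.+1)%N%:R * 2^-1.
    by rewrite natrM mulrC mulrA mulVf // mul1r.
  rewrite expRM_natl exprM.
  have -> : (4 : R) = 2 ^+ 2 by rewrite expr2; lra.
  rewrite -!exprM [(2 * _)%N]mulnC.
  apply: lerXn2r; rewrite ?nnegrE ?(ltW (expR_gt0 _)) //; exact: expR_half_le2.
have fp : (0 : R) < k.+1`!%:R by rewrite ltr0n fact_gt0.
rewrite natrM natrX natrX.
rewrite -(@ler_pM2r _ (k.+1`!%:R)^-1) ?invr_gt0 // -mulrA divff ?gt_eqF // mulr1.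
apply: le_trans e4.
apply: le_trans h; lra.
Qed.

Lemma powpow (R : realType) k : (k ^ k <= 4 ^ k * k`!)%N.
Proof. by have := @powpow_R R k; rewrite ler_nat. Qed.

Section NatL.
Local Open Scope nat_scope.

Lemma expn_mono a b k : a <= b -> a ^ k <= b ^ k.
Proof. by move=> h; elim: k => [|k IH] //; rewrite !expnS leq_mul. Qed.

Lemma ffact_leexp n u : n ^_ u <= n ^ u.
Proof.
elim: u n => [|u IH] n; first by [].
rewrite ffactnS expnS leq_mul //; apply: leq_trans (IH _) _.
by apply: expn_mono; rewrite leq_pred.
Qed.

Lemma keyL (R : realType) n u e m : 0 < e -> 2 * u <= 3 * e -> u <= n -> m <= 8 * u ^ 3 ->
  'C(n, u) * 'C(m, e) * n * 2 ^ u * 2 ^ e <= 24576 ^ e * n ^ (2 * e).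
Proof.
move=> e0 hue hun hm.
have he2 : u + 1 <= 2 * e by lia.
have P0 : 0 < e`! * u ^ u * e ^ e.
  rewrite !muln_gt0 fact_gt0 /= !expn_gt0 e0 /=.
  by case: u {hue hun hm he2} => [|u].
rewrite -(leq_pmul2r P0).
have f1 : 'C(n, u) * u ^ u <= 4 ^ u * n ^ u.
  apply: leq_trans (leq_mul (leqnn _) (powpow R u)) _.
  rewrite mulnCA bin_ffact leq_mul //; exact: ffact_leexp.
have f2 : 'C(m, e) * e`! <= (8 * u ^ 3) ^ e.
  rewrite bin_ffact; apply: leq_trans (ffact_leexp _ _) _.
  exact: expn_mono.
have f3 : e ^ e <= 4 ^ e * e`! := powpow R e.
have f4 : 2 ^ e * u ^ (3 * e) <= 3 ^ e * u ^ (2 * e) * e ^ e.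
  rewrite !expnM -!expnMn; apply: expn_mono.
  have E1 : 2 * u ^ 3 = u ^ 2 * (2 * u) by ring.
  have E2 : 3 * u ^ 2 * e = u ^ 2 * (3 * e) by ring.
  by rewrite E1 E2 leq_mul.
have f5 : 8 ^ u <= 64 ^ e.
  have -> : 64 = 8 ^ 2 by [].
  rewrite -expnM leq_exp2l //; lia.
have f6 : n ^ (u + 1) * u ^ (2 * e) <= 4 ^ e * u ^ u * n ^ (2 * e).
  have -> : 2 * e = u + 1 + (2 * e - u - 1) by lia.
  rewrite !expnD expn1.
  set d := 2 * e - u - 1.
  have ud : u ^ d <= n ^ d by apply: expn_mono.
  have u4 : u <= 4 ^ e.
    apply: leq_trans (_ : 2 * e <= 4 ^ e); first lia.
    have -> : 4 = 2 ^ 2 by [].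
    rewrite -expnM; apply: leq_trans (ltnW (ltn_expl _ (isT : 1 < 2))) _.
    rewrite leq_exp2l //; lia.
  have : (n ^ u * n) * ((u ^ u * u) * u ^ d) <= (n ^ u * n) * ((u ^ u * 4 ^ e) * n ^ d).
    by rewrite leq_mul // leq_mul // leq_mul.
  rewrite expn1 => h; apply: leq_trans h _; apply: eq_leq; ring.
apply: (@leq_trans (('C(n, u) * u ^ u) * ('C(m, e) * e`!) * e ^ e * (n * 2 ^ u * 2 ^ e))).
  apply: eq_leq; ring.
have := leq_mul (leq_mul (leq_mul f1 f2) f3) (leqnn (n * 2 ^ u * 2 ^ e)).
move=> H; apply: (leq_trans H).
apply: (@leq_trans (8 ^ u * 32 ^ e * (2 ^ e * u ^ (3 * e)) * n ^ (u + 1) * e`!)).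
  apply: eq_leq.
  have -> : 8 ^ u = 4 ^ u * 2 ^ u by rewrite -expnMn.
  have -> : 32 ^ e = 8 ^ e * 4 ^ e by rewrite -expnMn.
  rewrite expnMn expnM expnD expn1; ring.
apply: leq_trans (leq_mul (leq_mul (leq_mul (leqnn _) f4) (leqnn _)) (leqnn _)) _.
apply: (@leq_trans (32 ^ e * 3 ^ e * e ^ e * e`! * (8 ^ u * (n ^ (u + 1) * u ^ (2 * e))))).
  apply: eq_leq; ring.
apply: leq_trans (leq_mul (leqnn _) (leq_mul f5 f6)) _.
apply: eq_leq.
have -> : 24576 ^ e = 64 ^ e * 32 ^ e * 3 ^ e * 4 ^ e by rewrite -!expnMn.
ring.
Qed.
End NatL.

Lemma per_k (R : realType) n u k m (p : R) : (0 < n)%N -> (0 < k)%N ->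
  (2 * u <= 3 * k)%N -> (u <= n)%N -> (m <= 8 * u ^ 3)%N -> 0 <= p ->
  p <= (24576%:R)^-1 / n%:R ^+ 2 ->
  p ^+ k *+ 'C(m, k) <= ('C(n, u)%:R * n%:R * 2 ^+ u)^-1 * (2^-1) ^+ k.
Proof.
move=> n0 k0 huk hun hm p0 hp.
have hK := keyL R k0 huk hun hm.
move: hK; rewrite -(ler_nat R) !natrM !natrX => hK.
have Cnu : (0 < 'C(n, u))%N by rewrite bin_gt0.
set D : R := 24576%:R ^+ k * n%:R ^+ (2 * k).
have D0 : 0 < D by rewrite /D mulr_gt0 // exprn_gt0 // ltr0n.
set b : R := 'C(n, u)%:R * n%:R * 2 ^+ u * 2 ^+ k.
have b0 : 0 < b by rewrite /b !mulr_gt0 // ?exprn_gt0 // ltr0n.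
have hpk : p ^+ k <= ((24576%:R)^-1 / n%:R ^+ 2) ^+ k.
  by apply: lerXn2r; rewrite ?nnegrE // (le_trans p0 hp).
have eD : ((24576%:R)^-1 / n%:R ^+ 2) ^+ k = D^-1 :> R.
  by rewrite /D exprM -exprMn -exprVn -[RHS]exprVn invfM !exprVn.
have eb : ('C(n, u)%:R * n%:R * 2 ^+ u)^-1 * (2^-1) ^+ k = b^-1 :> R.
  by rewrite /b [RHS]invfM exprVn.
rewrite eb -mulr_natr.
apply: le_trans (ler_wpM2r (ler0n _ _) hpk) _.
rewrite eD mulrC ler_pdivrMr // ler_pdivlMl //.
apply: (le_trans _ hK); rewrite le_eqVlt; apply/orP; left; apply/eqP; rewrite /b; ring.
Qed.

Lemma geom_eq (R : realType) m : \sum_(k < m) (2^-1 : R) ^+ k = 2 - 2 * (2^-1) ^+ m.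
Proof.
elim: m => [|m IH]; first by rewrite big_ord0 expr0; lra.
rewrite big_ord_recr /= IH exprS.
set x := (2^-1 : R) ^+ m; have h2 : (2 : R) * 2^-1 = 1 by rewrite divff.
lra.
Qed.

Lemma geom_le (R : realType) m : \sum_(k < m) (2^-1 : R) ^+ k <= 2.
Proof.
rewrite geom_eq; have : 0 <= (2^-1 : R) ^+ m by rewrite exprn_ge0 // invr_ge0.
lra.
Qed.

Definition WU n (U : {set 'I_n}) : {set word n} := [set w in CR n | vset w \subset U].

Lemma card_WU n (U : {set 'I_n}) : (#|WU U| <= 8 * #|U| ^ 3)%N.
Proof.
set L : {set letter n} := finset.setX U [set: bool].
have sub : WU U \subset finset.setX (finset.setX L L) L.
  apply/fintype.subsetP => -[[a b] c]; rewrite !inE => /andP[_ sub].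
  have hv : forall x, x \in [set a.1; b.1; c.1] -> x \in U.
    by move=> x hx; apply: (fintype.subsetP sub); rewrite vsetE.
  by rewrite !hv // !inE eqxx ?orbT.
apply: leq_trans (subset_leq_card sub) _.
rewrite !cardsX cardsT card_bool.
apply: eq_leq; ring.
Qed.

Lemma bad_to_U (R : realType) n (p : R) : 0 <= p ->
  \sum_(F : {set word n} | (F \subset CR n) && badF F) p ^+ #|F| <=
  \sum_(U : {set 'I_n}) \sum_(F : {set word n} | (F \subset WU U) &&
        ((0 < #|F|)%N && (2 * #|U| <= 3 * #|F|)%N)) p ^+ #|F|.
Proof.
move=> p0.
rewrite (partition_big (@VF n) xpredT) //=.
apply: ler_sum => U _.
rewrite big_mkcond [X in _ <= X]big_mkcond /=.
apply: ler_sum => F _.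
case: ifP => [/andP[/andP[FC bF] /eqP VU]|_]; last by case: ifP => _; rewrite ?exprn_ge0.
rewrite ifT //.
apply/andP; split.
  apply/fintype.subsetP => E EF; rewrite inE (fintype.subsetP FC _ EF) /= -VU.
  by apply/fintype.subsetP => v vE; apply/bigcupP; exists E.
case/andP: (bF) => Fne _.
by rewrite card_gt0 Fne -VU bad_count.
Qed.

Lemma per_U (R : realType) n (p : R) (U : {set 'I_n}) : (0 < n)%N -> 0 <= p ->
  p <= (24576%:R)^-1 / n%:R ^+ 2 ->
  \sum_(F : {set word n} | (F \subset WU U) &&
        ((0 < #|F|)%N && (2 * #|U| <= 3 * #|F|)%N)) p ^+ #|F|
  <= ('C(n, #|U|)%:R * n%:R * 2 ^+ #|U|)^-1 * 2.
Proof.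
move=> n0 p0 hp.
rewrite big_mkcondr /=.
have E := @sum_subsets_card R _ (WU U)
  (fun k => if (0 < k)%N && (2 * #|U| <= 3 * k)%N then p ^+ k else 0).
rewrite /= in E; rewrite E.
set a := ('C(n, #|U|)%:R * n%:R * 2 ^+ #|U|)^-1.
have a0 : 0 <= a.
  by rewrite /a invr_ge0 !mulr_ge0 // exprn_ge0.
apply: (@le_trans _ _ (\sum_(k < #|WU U|.+1) a * (2^-1) ^+ k)).
  apply: ler_sum => k _.
  case: ifP => [/andP[k0 hk]|_]; last by rewrite mul0rn mulr_ge0 // exprn_ge0 // invr_ge0.
  apply: per_k => //; first by rewrite -[n in (_ <= n)%N]card_ord max_card.
  exact: card_WU.
by rewrite -mulr_sumr ler_wpM2l // geom_le.
Qed.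

Lemma sum_U (R : realType) n (p : R) : (0 < n)%N -> 0 <= p ->
  p <= (24576%:R)^-1 / n%:R ^+ 2 ->
  \sum_(U : {set 'I_n}) \sum_(F : {set word n} | (F \subset WU U) &&
        ((0 < #|F|)%N && (2 * #|U| <= 3 * #|F|)%N)) p ^+ #|F| <= 4 / n%:R.
Proof.
move=> n0 p0 hp.
apply: (@le_trans _ _ (\sum_(U : {set 'I_n}) ('C(n, #|U|)%:R * n%:R * 2 ^+ #|U|)^-1 * 2)).
  by apply: ler_sum => U _; apply: per_U.
rewrite (eq_bigl (fun U : {set 'I_n} => U \subset [set: 'I_n])); last by move=> U; rewrite finset.subsetT.
have E := @sum_subsets_card R _ [set: 'I_n]
  (fun k => ('C(n, k)%:R * n%:R * 2 ^+ k)^-1 * 2).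
rewrite /= in E; rewrite E cardsT card_ord.
have nR : (n%:R : R) != 0 by rewrite pnatr_eq0 -lt0n.
apply: (@le_trans _ _ (\sum_(k < n.+1) (2 / n%:R) * (2^-1) ^+ k)).
  apply: ler_sum => k _.
  have Ck : ('C(n, k)%:R : R) != 0 by rewrite pnatr_eq0 -lt0n bin_gt0 -ltnS.
  rewrite le_eqVlt; apply/orP; left; apply/eqP.
  rewrite -mulr_natr exprVn; field.
  by rewrite Ck nR /= expf_neq0.
rewrite -mulr_sumr.
have : 0 <= 2 / (n%:R : R) by rewrite divr_ge0.
have := geom_le R n.+1.
set s := \sum_(_ < _) _; set t := 2 / _.
move=> hs ht.
have -> : 4 / (n%:R : R) = t * 2 by rewrite /t; field.
by rewrite ler_wpM2l.
Qed.

Unset Implicit Arguments.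
Local Open Scope classical_set_scope.
Local Open Scope ring_scope.

Theorem lemma2p2 (R : realType) :
  exists c : R, 0 < c /\
  forall p : nat -> R,
    (forall n, 0 <= p n <= 1) ->
    (exists N : nat, forall n : nat, (N <= n)%N -> p n <= c / (n%:R ^+ 2)) ->
    (fun n : nat => @Pr R n (p n) (@good n)) @ \oo --> (1 : R).
Proof.
exists (24576%:R)^-1; split; first by rewrite invr_gt0 ltr0n.
move=> p hp [N hN].
apply/cvgrPdist_le => e e0.
have b0 : 0 <= 4 / e by rewrite divr_ge0 // ltW.
exists (maxn (maxn N 1) (Num.bound (4 / e))) => // i /= hi.
rewrite !geq_max in hi; case/andP: hi => /andP[hiN hi1] hib.
have [h0 h1] := andP (@one_minus_Pr R i (p i) (hp i)).
have pi0 : 0 <= p i by case/andP: (hp i).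
have B : 1 - @Pr R i (p i) (@good i) <= 4 / i%:R.
  apply: le_trans h1 _; apply: le_trans (@bad_to_U R i (p i) pi0) _.
  by apply: sum_U => //; apply: hN.
rewrite ger0_norm //; apply: le_trans B _.
have i0 : (0 : R) < i%:R by rewrite ltr0n.
rewrite ler_pdivrMr // -ler_pdivrMl //.
rewrite mulrC; apply: (le_trans (ltW (archi_boundP b0))).
by rewrite ler_nat.
Qed.
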